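(* Let $F=\mathbb C(a,b)$ be the field of rational functions in two variables over $\mathbb C$ and $\epsilon=\frac{-1+i\sqrt3}{2}$. Let $D_3$ be the $F$-algebra generated by $x,y$ subject to $x^3=a$, $y^3=b$, $yx=\epsilon xy$ (a central division $F$-algebra of degree $3$), with the involution $\ast$ which fixes $a,b,x,y$ and acts on $\mathbb C$ by complex conjugation. Let $K=F(x)$, a $\ast$-invariant maximal subfield, with $1,y,y^2$ a right $K$-basis of $D_3$. Then: (i) the involution $\ast$ on $D_3$ is formally real; (ii) the involution $X^\#=A^{-1}X^\ast A$ on $M_3(K)$, where $X^\ast$ is the transpose with $\ast$ applied entrywise and $A=\begin{pmatrix}1&0&0\\0&0&b\\0&b&0\end{pmatrix}$ (which is the involution extending $\ast$ under the left regular representation $D_3\to M_3(K)$ with respect to $1,y,y^2$, so that $(D_3\otimes_F K)\cong(M_3(K),\#)$), is not formally real.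
   Context: An involution $\#$ on a ring $R$ is formally real if every finite sum of nonzero elements of the form $rr^\#$ ($r\in R$) is nonzero. *)

(* Defs.v *)
From HB Require Import structures.
From mathcomp Require Import all_boot all_order all_algebra.
From mathcomp Require Import fraction generic_quotient.
Set Implicit Arguments. Unset Strict Implicit. Unset Printing Implicit Defensive.
Import Order.TTheory GRing.Theory Num.Theory.
Local Open Scope ring_scope.

Definition formally_real (V : zmodType) (mul : V -> V -> V) (inv : V -> V) :=
  forall s : seq V, s != [::] ->
    (forall r, r \in s -> mul r (inv r) != 0) ->
    \sum_(r <- s) mul r (inv r) != 0.

Section RatFun.
Variable C : numClosedFieldType.

(* Rational functions in two variables over C: the fraction field of C[u][v].
   The inner variable u is ('X%:P), the outer variable v is 'X. *)
Definition RF := {fraction {poly {poly C}}}.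
Definition var_in : RF := tofrac ('X%:P).
Definition var_out : RF := tofrac 'X.

Definition conjP (p : {poly {poly C}}) : {poly {poly C}} :=
  map_poly (map_poly Num.conj) p.
Definition conjRF (q : RF) : RF :=
  let r := repr q in tofrac (conjP r.1) / tofrac (conjP r.2).

Definition constRF (c : C) : RF := tofrac (c%:P%:P).

Definition eps : C := (-1 + 'i * sqrtC 3) / 2.

Definition Fa : RF := var_in.
Definition Fb : RF := var_out.

(* ---------- D_3, concretely: an element is its coefficient array c with
   c i j the coefficient of x^i y^j (i,j < 3) over F; multiplication is
   determined by x^3 = a, y^3 = b, yx = eps xy, i.e.
   (x^i y^j)(x^k y^l) = eps^(jk) a^((i+k)/3) b^((j+l)/3) x^((i+k)%3) y^((j+l)%3). *)
Definition D3 := 'M[RF]_3.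

Definition D3x : D3 := \matrix_(i, j) ((i == 1%N :> nat) && (j == 0%N :> nat))%:R.
Definition D3y : D3 := \matrix_(i, j) ((i == 0%N :> nat) && (j == 1%N :> nat))%:R.

Definition D3mul (u v : D3) : D3 :=
  \matrix_(p, q) \sum_(i < 3) \sum_(j < 3) \sum_(k < 3) \sum_(l < 3)
     if ((((i : nat) + k) %% 3)%N == p) && ((((j : nat) + l) %% 3)%N == q) then
       u i j * v k l * constRF eps ^+ ((j : nat) * k)%N
         * Fa ^+ (((i : nat) + k) %/ 3)%N * Fb ^+ (((j : nat) + l) %/ 3)%N
     else 0.

(* The involution * : F-semilinear (conjugation on C, fixing a, b),
   anti-multiplicative, fixing x and y; hence
   (c x^i y^j)^* = c^* y^j x^i = c^* eps^(ij) x^i y^j. *)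
Definition D3star (u : D3) : D3 :=
  \matrix_(i, j) (conjRF (u i j) * constRF eps ^+ ((i : nat) * j)%N).

(* ---------- K = F(x) with x^3 = a, i.e. K = C(x, b) (a = x^3):
   inner var := x, outer var := b; * acts by conjugation on C fixing x, b. --- *)
Definition Kx : RF := var_in.
Definition Kb : RF := var_out.

Definition Amx : 'M[RF]_3 :=
  \matrix_(i, j) (if (i == 0%N :> nat) && (j == 0%N :> nat) then 1
                  else if ((i : nat) + j == 3)%N then Kb else 0).

Definition Mstar (X : 'M[RF]_3) : 'M[RF]_3 := map_mx conjRF X^T.

Definition Msharp (X : 'M[RF]_3) : 'M[RF]_3 := invmx Amx *m Mstar X *m Amx.

End RatFun.

(* Main.v *)
Require Import Defs.
From HB Require Import structures.
From mathcomp Require Import all_boot all_order all_algebra.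
From mathcomp Require Import fraction generic_quotient.
From Stdlib Require Import Lia Compare_dec.
Import Order.TTheory GRing.Theory Num.Theory.
Set Implicit Arguments. Unset Strict Implicit.

Definition ltlex (x y : nat * nat) := (x.1 < y.1) || ((x.1 == y.1) && (x.2 < y.2)).
Definition lelex (x y : nat * nat) := (x == y) || ltlex x y.
Definition addp (x y : nat * nat) := (x.1 + y.1, x.2 + y.2).

Lemma ltlexP a b c d : reflect (Peano.lt a c \/ (a = c /\ Peano.lt b d)) (ltlex (a, b) (c, d)).
Proof.
rewrite /ltlex /=; apply: (iffP idP).
  by case/orP=> [/ssrnat.ltP h|/andP[/eqP h /ssrnat.ltP h']]; [left|right].
by case=> [/ssrnat.ltP ->//|[-> /ssrnat.ltP ->]]; rewrite eqxx orbT.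
Qed.

Lemma lelexP a b c d : reflect ((a = c /\ b = d) \/ Peano.lt a c \/ (a = c /\ Peano.lt b d)) (lelex (a, b) (c, d)).
Proof.
rewrite /lelex; apply: (iffP orP).
  case=> [/eqP [-> ->]|/ltlexP h]; by [left|right].
case=> [[-> ->]|h]; [left; exact: eqxx | right; exact/ltlexP].
Qed.

Lemma ltlex_total x y : x != y -> ltlex x y || ltlex y x.
Proof.
case: x y => [a b] [c d] hne.
have h : ~ (a = c /\ b = d) by move=> [e1 e2]; move: hne; rewrite e1 e2 eqxx.
case: (ltlexP a b c d) => //= h1; apply/ltlexP; lia.
Qed.

Lemma lelex_trans x y z : lelex x y -> lelex y z -> lelex x z.
Proof.
move: x y z => [a b] [c d] [e f] /lelexP h1 /lelexP h2; apply/lelexP; lia.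
Qed.

Lemma ltlex_irr x : ltlex x x = false.
Proof. by rewrite /ltlex !ltnn eqxx. Qed.

Lemma lelex_total x y : lelex x y || lelex y x.
Proof.
move: x y => [a b] [c d]; case: (lt_eq_lt_dec a c) => [[h|h]|h].
- apply/orP; left; apply/lelexP; lia.
- case: (lt_eq_lt_dec b d) => [[h2|h2]|h2]; apply/orP; [left|left|right]; apply/lelexP; lia.
- apply/orP; right; apply/lelexP; lia.
Qed.

Lemma lelex_ltlex x y : lelex x y -> x != y -> ltlex x y.
Proof. by rewrite /lelex => /orP[/eqP->|//]; rewrite eqxx. Qed.

Lemma ltlex_add x1 y1 x2 y2 : lelex x1 y1 -> lelex x2 y2 ->
  ltlex x1 y1 || ltlex x2 y2 -> ltlex (addp x1 x2) (addp y1 y2).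
Proof.
move: x1 y1 x2 y2 => [a b] [c d] [e f] [g h] /lelexP h1 /lelexP h2.
rewrite /addp /= => /orP[/ltlexP h3|/ltlexP h3]; apply/ltlexP; rewrite -!plusE; lia.
Qed.

Lemma ltlex_cancel (a b c d p q : nat) :
  ltlex (3 * a + q, 3 * b + p)%N (3 * c + q, 3 * d + p)%N -> ltlex (a, b) (c, d).
Proof. move/ltlexP; rewrite -!plusE -!multE => h; apply/ltlexP; lia. Qed.

Lemma seq_max (T : eqType) (f : T -> nat * nat) (s : seq T) :
  s != [::] -> exists2 x, x \in s & forall y, y \in s -> lelex (f y) (f x).
Proof.
elim: s => // a s IH _.
case: (eqVneq s [::]) => [->|hs].
  by exists a; rewrite ?mem_seq1 // => y; rewrite mem_seq1 => /eqP->; rewrite /lelex eqxx.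
have [x xs hx] := IH hs.
case/orP: (lelex_total (f a) (f x)) => h.
  exists x; first by rewrite in_cons xs orbT.
  by move=> y; rewrite in_cons => /orP[/eqP->//|/hx].
exists a; first by rewrite in_cons eqxx.
move=> y; rewrite in_cons => /orP[/eqP->|/hx h']; first by rewrite /lelex eqxx.
exact: lelex_trans h' h.
Qed.

Unset Implicit Arguments.
Local Open Scope ring_scope.
Section S1.
Local Open Scope quotient_scope.
Variable C : numClosedFieldType.
Local Notation P := {poly {poly C}}.
Local Notation RF := (RF C).

Lemma pi_mul_tofrac (x : {ratio P}) :
  (\pi_(RF) x : RF) * tofrac (\d_x) = tofrac (\n_x).
Proof.
unlock tofrac. rewrite !piE. apply/eqmodP.
rewrite /= /FracField.equivf /FracField.mulf.
rewrite !numden_Ratio ?oner_neq0 ?mulf_neq0 ?oner_neq0 ?denom_ratioP //.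
by rewrite !mulr1 mulrC.
Qed.
Lemma frac_repr (q : RF) : q = tofrac (repr q).1 / tofrac (repr q).2.
Proof.
have hd : tofrac (\d_(repr q)) != 0 :> RF by rewrite tofrac_eq0 denom_ratioP.
by rewrite -[q in LHS]reprK -(pi_mul_tofrac (repr q)) mulfK.
Qed.

Lemma conjPK (p : P) : conjP (conjP p) = p.
Proof.
rewrite /conjP -map_poly_comp map_poly_id // => x _.
by rewrite /= -map_poly_comp map_poly_id // => y _; rewrite /= conjCK.
Qed.

Lemma conjP_eq0 (p : P) : (conjP p == 0) = (p == 0).
Proof.
apply/eqP/eqP => [h|->]; last by rewrite /conjP rmorph0.
by rewrite -[p]conjPK h /conjP rmorph0.
Qed.

Lemma conjPM (p q : P) : conjP (p * q) = conjP p * conjP q.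
Proof. by rewrite /conjP rmorphM. Qed.
Lemma conjPD (p q : P) : conjP (p + q) = conjP p + conjP q.
Proof. by rewrite /conjP rmorphD. Qed.

Lemma conjRF_frac (p q : P) : q != 0 ->
  conjRF (tofrac p / tofrac q) = tofrac (conjP p) / tofrac (conjP q).
Proof.
move=> hq; rewrite /conjRF.
set f := tofrac p / tofrac q.
have hr := frac_repr f.
have hd : \d_(repr f) != 0 by exact: denom_ratioP.
have : tofrac (repr f).1 / tofrac (repr f).2 == tofrac p / tofrac q :> RF by rewrite -hr.
rewrite eqr_div ?tofrac_eq0 // -!tofracM tofrac_eq => /eqP h.
apply/eqP; rewrite eqr_div ?tofrac_eq0 ?conjP_eq0 // -!tofracM tofrac_eq.
by rewrite -!conjPM h.
Qed.

Lemma conjRF_tofrac (p : P) : conjRF (tofrac p) = tofrac (conjP p).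
Proof.
have := @conjRF_frac p 1 (oner_neq0 _).
have e : forall x : RF, x / tofrac (1 : P) = x by move=> x; rewrite rmorph1 divr1.
have e1 : conjP (1 : P) = 1 by rewrite /conjP !rmorph1.
by rewrite e1 !e.
Qed.

Lemma conjRFM_aux (a b c d : P) : b != 0 -> d != 0 ->
  conjRF (tofrac a / tofrac b * (tofrac c / tofrac d)) =
  conjRF (tofrac a / tofrac b) * conjRF (tofrac c / tofrac d).
Proof.
move=> hb hd.
rewrite mulf_div -!tofracM (@conjRF_frac _ (b * d) (mulf_neq0 hb hd)).
rewrite (@conjRF_frac _ b hb) (@conjRF_frac _ d hd).
by rewrite !conjPM !tofracM mulf_div.
Qed.

Lemma conjRFM (f g : RF) : conjRF (f * g) = conjRF f * conjRF g.
Proof.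
rewrite (frac_repr f) (frac_repr g); apply: conjRFM_aux; exact: denom_ratioP.
Qed.

Lemma conjRFD_aux (a b c d : P) : b != 0 -> d != 0 ->
  conjRF (tofrac a / tofrac b + (tofrac c / tofrac d)) =
  conjRF (tofrac a / tofrac b) + conjRF (tofrac c / tofrac d).
Proof.
move=> hb hd.
have t1 : tofrac b != 0 :> RF by rewrite tofrac_eq0.
have t2 : tofrac d != 0 :> RF by rewrite tofrac_eq0.
have c1 : tofrac (conjP b) != 0 :> RF by rewrite tofrac_eq0 conjP_eq0.
have c2 : tofrac (conjP d) != 0 :> RF by rewrite tofrac_eq0 conjP_eq0.
rewrite (addf_div _ _ t1 t2) -!tofracM -tofracD (@conjRF_frac _ (b * d) (mulf_neq0 hb hd)).
rewrite (@conjRF_frac _ b hb) (@conjRF_frac _ d hd).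
by rewrite (addf_div _ _ c1 c2) conjPD !conjPM !tofracD !tofracM.
Qed.

Lemma conjRFD (f g : RF) : conjRF (f + g) = conjRF f + conjRF g.
Proof.
rewrite (frac_repr f) (frac_repr g); apply: conjRFD_aux; exact: denom_ratioP.
Qed.

End S1.

Section S2.
Variable C : numClosedFieldType.
Local Notation P := {poly {poly C}}.
Local Notation RF := (RF C).

Lemma conjRF0 : conjRF (0 : RF) = 0.
Proof.
have -> : (0:RF) = tofrac (0:P) by rewrite tofrac0.
by rewrite conjRF_tofrac /conjP !rmorph0.
Qed.

Lemma conjRF_Kb : conjRF (Kb C) = Kb C.
Proof.
rewrite /Kb /var_out conjRF_tofrac; congr tofrac.
by rewrite /conjP map_polyX.
Qed.

Lemma Kb_neq0 : Kb C != 0.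
Proof. by rewrite /Kb /var_out tofrac_eq0 polyX_eq0. Qed.

Lemma two_neq0 : (2%:R : RF) != 0.
Proof.
have -> : (2%:R : RF) = tofrac (2%:R : P) by rewrite tofracMn tofrac1.
rewrite tofrac_eq0 -!polyC_natr !polyC_eq0.
by rewrite pnatr_eq0.
Qed.

Definition b := Kb C.
Definition Bmx : 'M[RF]_3 :=
  \matrix_(i, j) (if (i == 0%N :> nat) && (j == 0%N :> nat) then 1
                  else if ((i : nat) + j == 3)%N then b^-1 else 0).
Definition r1 : 'M[RF]_3 :=
  \matrix_(i, j) (if (i == 0%N :> nat) && (j == 0%N :> nat) then b else 0).
Definition r2 : 'M[RF]_3 :=
  \matrix_(i, j) (if (i == 0%N :> nat) then
                    (if (j == 1%N :> nat) then - b ^+ 2 else if (j == 2%N :> nat) then b else 0)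
                  else 0).

Lemma AB : Amx C *m Bmx = 1%:M.
Proof.
have hb := Kb_neq0.
apply/matrixP => i j; rewrite !(mxE, big_ord_recl, big_ord0) /=.
case: i => [[|[|[|?]]] ?] //; case: j => [[|[|[|?]]] ?] //=;
rewrite /b ?mulr0 ?mul0r ?addr0 ?add0r ?mulr1 ?mulfV //.
Qed.


Lemma invA : invmx (Amx C) = Bmx.
Proof.
have [uA _] := mulmx1_unit AB.
by rewrite -[invmx _]mulmx1 -AB mulmxA mulVmx // mul1mx.
Qed.

Lemma conjRF_opp (x : RF) : conjRF (- x) = - conjRF x.
Proof. by apply/eqP; rewrite -addr_eq0 -conjRFD addNr conjRF0. Qed.

Lemma conjRF_b2 : conjRF (- b ^+ 2) = - b ^+ 2.
Proof. by rewrite conjRF_opp expr2 conjRFM /b conjRF_Kb. Qed.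

Definition E00 : 'M[RF]_3 :=
  \matrix_(i, j) (if (i == 0%N :> nat) && (j == 0%N :> nat) then 1 else 0).

Ltac mxcomp := apply/matrixP; case=> [[|[|[|?]]] ?] //; case=> [[|[|[|?]]] ?] //;
  rewrite !(mxE, big_ord_recl, big_ord0) /=.

Lemma r1B : r1 *m Bmx = r1.
Proof. mxcomp; by rewrite ?mulr0 ?mul0r ?addr0 ?add0r ?mulr1 ?mul1r. Qed.

Definition r2b : 'M[RF]_3 :=
  \matrix_(i, j) (if (i == 0%N :> nat) then
                    (if (j == 1%N :> nat) then 1 else if (j == 2%N :> nat) then - b else 0)
                  else 0).

Lemma r2B : r2 *m Bmx = r2b.
Proof.
have hb := Kb_neq0.
mxcomp; rewrite ?mulr0 ?mul0r ?addr0 ?add0r ?mulr1 ?mul1r //.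
  by rewrite /b mulfV.
by rewrite /b expr2 mulNr mulfK.
Qed.

Lemma Mstar_r1 : Mstar r1 = r1^T.
Proof.
apply/matrixP => i j; rewrite !mxE.
by rewrite (fun_if (@conjRF C)) conjRF0 /b conjRF_Kb.
Qed.

Lemma Mstar_r2 : Mstar r2 = r2^T.
Proof.
apply/matrixP => i j; rewrite !mxE.
by rewrite !(fun_if (@conjRF C)) conjRF0 conjRF_b2 /b conjRF_Kb.
Qed.

Lemma r1r1 : r1 *m r1^T = (b ^+ 2) *: E00.
Proof. mxcomp; by rewrite ?mulr0 ?mul0r ?addr0 ?add0r ?mulr1 ?mul1r ?expr2. Qed.

Lemma r2r2 : r2b *m r2^T = (- (2%:R * b ^+ 2)) *: E00.
Proof.
mxcomp; rewrite ?mulr0 ?mul0r ?addr0 ?add0r ?mulr1 ?mul1r //.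
by rewrite mulNr -expr2 -opprD mulr2n mulrDl mul1r.
Qed.

Lemma E00A : E00 *m Amx C = E00.
Proof. mxcomp; by rewrite ?mulr0 ?mul0r ?addr0 ?add0r ?mulr1 ?mul1r. Qed.

Lemma T1 : r1 *m Msharp r1 = (b ^+ 2) *: E00.
Proof. by rewrite /Msharp invA Mstar_r1 !mulmxA r1B r1r1 -scalemxAl E00A. Qed.

Lemma T2 : r2 *m Msharp r2 = (- (2%:R * b ^+ 2)) *: E00.
Proof. by rewrite /Msharp invA Mstar_r2 !mulmxA r2B r2r2 -scalemxAl E00A. Qed.


Lemma E00_neq0 : E00 != 0.
Proof. by apply/negP => /eqP /matrixP /(_ ord0 ord0); rewrite !mxE /= => /eqP; rewrite oner_eq0. Qed.

Lemma sum0 : \sum_(r <- [:: r1; r1; r2]) r *m Msharp r = 0.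
Proof.
rewrite big_cons big_cons big_seq1.
rewrite T1 T2.
rewrite addrA -!scalerDl.
have e : b^+2 + b^+2 + - (2%:R * b^+2) = 0 :> RF.
  by rewrite mulr_natl mulr2n subrr.
by rewrite e scale0r.
Qed.





Lemma nz (r : 'M[RF]_3) : r \in [:: r1; r1; r2] -> r *m Msharp r != 0.
Proof.
have hb : b != 0 := Kb_neq0.
have h1 : b ^+ 2 != 0 := expf_neq0 2 hb.
have h2 : - (2%:R * b ^+ 2) != 0.
  rewrite oppr_eq0. exact: (mulf_neq0 two_neq0 h1).
have h3 (x : RF) : x != 0 -> x *: E00 != 0.
  move=> hx. rewrite scalemx_eq0 negb_or hx E00_neq0. done.
rewrite !in_cons in_nil orbF => /orP[/eqP->|/orP[/eqP->|/eqP->]].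
- rewrite T1; exact: (h3 _ h1).
- rewrite T1; exact: (h3 _ h1).
- rewrite T2; exact: (h3 _ h2).
Qed.

Lemma part2 : ~ formally_real (fun X Y : 'M[RF]_3 => X *m Y) (@Msharp C).
Proof.
rewrite /formally_real => H.
have ne : [:: r1; r1; r2] != [::] by rewrite -size_eq0.
move: (H [:: r1; r1; r2] ne nz) => /=.
by rewrite sum0 eqxx.
Qed.

End S2.
Set Implicit Arguments. Unset Strict Implicit.
Section Val.
Variable C : numClosedFieldType.
Local Notation P := {poly {poly C}}.

Definition db (U : P) := (size U).-1.
Definition da (U : P) := (size (lead_coef U)).-1.
Definition lc2 (U : P) : C := lead_coef (lead_coef U).
Definition coef2 (U : P) (n m : nat) : C := (U`_n)`_m.

Lemma pred_lt (k n : nat) : (k.-1 < n)%N -> (k <= n)%N.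
Proof. by case: k. Qed.

Lemma sizeE (R : nzSemiRingType) (p : {poly R}) : p != 0 -> size p = (size p).-1.+1.
Proof. by rewrite -size_poly_gt0 => /prednK. Qed.

Lemma dbM (U W : P) : U != 0 -> W != 0 -> db (U * W) = (db U + db W)%N.
Proof.
move=> hU hW; rewrite /db size_mul // (sizeE hU) (sizeE hW).
by rewrite addSn addnS.
Qed.

Lemma daM (U W : P) : U != 0 -> W != 0 -> da (U * W) = (da U + da W)%N.
Proof.
move=> hU hW; rewrite /da lead_coefM.
have hU' : lead_coef U != 0 by rewrite lead_coef_eq0.
have hW' : lead_coef W != 0 by rewrite lead_coef_eq0.
by rewrite size_mul // (sizeE hU') (sizeE hW') addSn addnS.
Qed.

Lemma lc2M (U W : P) : lc2 (U * W) = lc2 U * lc2 W.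
Proof. by rewrite /lc2 !lead_coefM. Qed.

Lemma coef2_top (U : P) : coef2 U (db U) (da U) = lc2 U.
Proof. by []. Qed.

Lemma coef2_low (U : P) n m :
  ((db U < n) || ((db U == n) && (da U < m)))%N -> coef2 U n m = 0.
Proof.
rewrite /coef2 => /orP[/pred_lt h|/andP[/eqP <- /pred_lt h]].
  by rewrite (nth_default _ h) coef0.
by rewrite nth_default.
Qed.

Lemma coef2D (U W : P) n m : coef2 (U + W) n m = coef2 U n m + coef2 W n m.
Proof. by rewrite /coef2 !coefD. Qed.

Lemma coef2_sum (I : Type) (r : seq I) (F : I -> P) n m :
  coef2 (\sum_(i <- r) F i) n m = \sum_(i <- r) coef2 (F i) n m.
Proof. by rewrite /coef2 !coef_sum. Qed.

Lemma coef20 n m : coef2 0 n m = 0.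
Proof. by rewrite /coef2 !coef0. Qed.

Lemma dbC (c : C) : db (c%:P%:P) = 0%N.
Proof. by rewrite /db size_polyC; case: (_ != 0). Qed.
Lemma daC (c : C) : da (c%:P%:P) = 0%N.
Proof. by rewrite /da lead_coefC size_polyC; case: (_ != 0). Qed.
Lemma lc2C (c : C) : lc2 (c%:P%:P) = c.
Proof. by rewrite /lc2 !lead_coefC. Qed.

Lemma dbXa e : db (('X : {poly C})%:P ^+ e) = 0%N.
Proof. by rewrite -rmorphXn /db size_polyC; case: (_ != 0). Qed.
Lemma daXa e : da (('X : {poly C})%:P ^+ e) = e.
Proof. by rewrite -rmorphXn /da lead_coefC size_polyXn. Qed.
Lemma lc2Xa e : lc2 (('X : {poly C})%:P ^+ e) = 1.
Proof. by rewrite -rmorphXn /lc2 lead_coefC lead_coefXn. Qed.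

Lemma dbXb e : db (('X : P) ^+ e) = e.
Proof. by rewrite /db size_polyXn. Qed.
Lemma daXb e : da (('X : P) ^+ e) = 0%N.
Proof. by rewrite /da lead_coefXn size_poly1. Qed.
Lemma lc2Xb e : lc2 (('X : P) ^+ e) = 1.
Proof. by rewrite /lc2 lead_coefXn lead_coef1. Qed.

End Val.

Section S5.
Variable C : numClosedFieldType.
Local Notation P := {poly {poly C}}.
Local Notation RF := (RF C).

Definition epsP : P := (eps C)%:P%:P.
Definition Pterm (U V : 'M[P]_3) (i j k l : 'I_3) : P :=
  U i j * V k l * epsP ^+ ((j : nat) * k)%N * (('X : {poly C})%:P) ^+ (((i : nat) + k) %/ 3)%N
   * ('X : P) ^+ (((j : nat) + l) %/ 3)%N.
Definition Pmul (U V : 'M[P]_3) : 'M[P]_3 :=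
  \matrix_(p, q) \sum_(i < 3) \sum_(j < 3) \sum_(k < 3) \sum_(l < 3)
     if ((((i : nat) + k) %% 3)%N == p) && ((((j : nat) + l) %% 3)%N == q) then
       Pterm U V i j k l else 0.
Definition Pstar (U : 'M[P]_3) : 'M[P]_3 :=
  \matrix_(i, j) (conjP (U i j) * epsP ^+ ((i : nat) * j)%N).

Definition toD (U : 'M[P]_3) : D3 C := map_mx (@tofrac _) U.

Lemma bridge_mul (U V : 'M[P]_3) : D3mul (toD U) (toD V) = toD (Pmul U V).
Proof.
have hm := big_morph (@tofrac P) (@tofracD P) (@tofrac0 P).
apply/matrixP => p q; rewrite !mxE hm; apply: eq_bigr => i _.
rewrite hm; apply: eq_bigr => j _.
rewrite hm; apply: eq_bigr => k _.
rewrite hm; apply: eq_bigr => l _.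
case: ifP => _; last by rewrite tofrac0.
by rewrite /toD !mxE /Pterm !tofracM !tofracXn.
Qed.

Lemma bridge_star (U : 'M[P]_3) : D3star (toD U) = toD (Pstar U).
Proof.
by apply/matrixP => i j; rewrite !mxE conjRF_tofrac tofracM tofracXn.
Qed.

Lemma db_conj (U : P) : db (conjP U) = db U.
Proof.
rewrite /db /conjP size_map_inj_poly //; first exact: map_poly_inj.
by rewrite rmorph0.
Qed.

Lemma lead_conj (U : P) : lead_coef (conjP U) = map_poly Num.conj (lead_coef U).
Proof.
rewrite /conjP lead_coef_map_inj //; first exact: map_poly_inj.
by rewrite rmorph0.
Qed.

Lemma da_conj (U : P) : da (conjP U) = da U.
Proof.
rewrite /da lead_conj size_map_inj_poly //; first exact: (can_inj (@conjCK C)).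
by rewrite rmorph0.
Qed.

Lemma lc2_conj (U : P) : lc2 (conjP U) = (lc2 U)^*.
Proof.
rewrite /lc2 lead_conj lead_coef_map_inj //; first exact: (can_inj (@conjCK C)).
by rewrite rmorph0.
Qed.

End S5.

Section S7.
Variable C : numClosedFieldType.
Local Notation P := {poly {poly C}}.

Lemma eps_neq0 : eps C != 0.
Proof.
rewrite /eps mulf_eq0 invr_eq0 negb_or pnatr_eq0 andbT.
apply/negP => /eqP h.
have h1 : 'i * sqrtC 3 = 1 :> C.
  by apply/eqP; rewrite -subr_eq0 addrC h.
have : (4%:R : C) == 0.
  have e : ('i * sqrtC 3) ^+ 2 = 1 :> C by rewrite h1 expr1n.
  rewrite exprMn sqrCi sqrtCK mulN1r in e.
  have -> : (4%:R : C) = 3%:R + 1 by rewrite natr1.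
  by rewrite -[X in _ + X]e subrr.
by rewrite pnatr_eq0.
Qed.

Lemma epsPX n : epsP C ^+ n = ((eps C) ^+ n)%:P%:P.
Proof. by rewrite /epsP !rmorphXn. Qed.

Lemma epsPX_neq0 n : epsP C ^+ n != 0.
Proof. by rewrite epsPX !polyC_eq0 expf_neq0 // eps_neq0. Qed.

Lemma Xa_neq0 e : (('X : {poly C})%:P ^+ e : P) != 0.
Proof. by rewrite -rmorphXn polyC_eq0 expf_neq0 // polyX_eq0. Qed.

Lemma Xb_neq0 e : (('X : P) ^+ e) != 0.
Proof. by rewrite expf_neq0 // polyX_eq0. Qed.

Lemma Pstar_neq0 (U : 'M[P]_3) k l : U k l != 0 -> Pstar U k l != 0.
Proof. by move=> h; rewrite mxE mulf_neq0 ?epsPX_neq0 // conjP_eq0. Qed.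

Lemma Pstar_eq0 (U : 'M[P]_3) k l : U k l = 0 -> Pstar U k l = 0.
Proof. by move=> h; rewrite mxE h /conjP rmorph0 mul0r. Qed.

Lemma db_star (U : 'M[P]_3) k l : U k l != 0 -> db (Pstar U k l) = db (U k l).
Proof.
move=> h; rewrite mxE dbM ?epsPX_neq0 ?conjP_eq0 //.
by rewrite db_conj epsPX dbC addn0.
Qed.

Lemma da_star (U : 'M[P]_3) k l : U k l != 0 -> da (Pstar U k l) = da (U k l).
Proof.
move=> h; rewrite mxE daM ?epsPX_neq0 ?conjP_eq0 //.
by rewrite da_conj epsPX daC addn0.
Qed.

Lemma lc2_star (U : 'M[P]_3) k l : lc2 (Pstar U k l) = (lc2 (U k l))^* * eps C ^+ (k * l).
Proof. by rewrite mxE lc2M lc2_conj epsPX lc2C. Qed.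

Section Term.
Variables (U : 'M[P]_3) (i j k l : 'I_3).
Hypotheses (hij : U i j != 0) (hkl : U k l != 0).
Local Notation T := (Pterm U (Pstar U) i j k l).

Let n1 : U i j * Pstar U k l != 0 := mulf_neq0 hij (Pstar_neq0 hkl).
Let n2 : U i j * Pstar U k l * epsP C ^+ (j * k) != 0 := mulf_neq0 n1 (epsPX_neq0 _).
Let n3 := mulf_neq0 n2 (Xa_neq0 ((i + k) %/ 3)).

Lemma db_term : db T = (db (U i j) + db (U k l) + (j + l) %/ 3)%N.
Proof.
rewrite /Pterm dbM ?Xb_neq0 // dbM ?Xa_neq0 // dbM ?epsPX_neq0 // dbM ?Pstar_neq0 //.
by rewrite db_star // epsPX dbC dbXa dbXb !addn0.
Qed.

Lemma da_term : da T = (da (U i j) + da (U k l) + (i + k) %/ 3)%N.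
Proof.
rewrite /Pterm daM ?Xb_neq0 // daM ?Xa_neq0 // daM ?epsPX_neq0 // daM ?Pstar_neq0 //.
by rewrite da_star // epsPX daC daXa daXb !addn0.
Qed.

Lemma lc2_term : lc2 T = lc2 (U i j) * ((lc2 (U k l))^* * eps C ^+ (k * l)) * eps C ^+ (j * k).
Proof.
by rewrite /Pterm !lc2M lc2_star epsPX lc2C lc2Xa lc2Xb !mulr1.
Qed.
End Term.

Lemma term_eq0 (U : 'M[P]_3) (i j k l : 'I_3) : (U i j == 0) || (U k l == 0) ->
  Pterm U (Pstar U) i j k l = 0.
Proof.
case/orP => /eqP h; rewrite /Pterm.
  by rewrite h !mul0r.
by rewrite (Pstar_eq0 h) mulr0 !mul0r.
Qed.

End S7.

Section S8.
Variable C : numClosedFieldType.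
Local Notation P := {poly {poly C}}.

Lemma mod3 (x : nat) (j : 'I_3) : ((3 * x + j) %% 3)%N = j.
Proof. by rewrite mulnC modnMDl modn_small. Qed.

Lemma sum4 (F : 'I_3 -> 'I_3 -> 'I_3 -> 'I_3 -> C) a b c d :
  (forall i j k l, ~~ [&& i == a, j == b, k == c & l == d] -> F i j k l = 0) ->
  \sum_(i < 3) \sum_(j < 3) \sum_(k < 3) \sum_(l < 3) F i j k l = F a b c d.
Proof.
move=> h.
rewrite (bigD1 a) //= [X in _ + X]big1 => [|i hi]; last first.
  apply: big1 => j _; apply: big1 => k _; apply: big1 => l _.
  by apply: h; rewrite (negbTE hi).
rewrite addr0 (bigD1 b) //= [X in _ + X]big1 => [|j hj]; last first.
  apply: big1 => k _; apply: big1 => l _.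
  by apply: h; rewrite eqxx (negbTE hj).
rewrite addr0 (bigD1 c) //= [X in _ + X]big1 => [|k hk]; last first.
  apply: big1 => l _.
  by apply: h; rewrite !eqxx (negbTE hk).
rewrite addr0 (bigD1 d) //= [X in _ + X]big1 => [|l hl]; last first.
  by apply: h; rewrite !eqxx (negbTE hl).
by rewrite addr0.
Qed.

Definition key (U : 'M[P]_3) (i j : 'I_3) : nat * nat :=
  (3 * db (U i j) + j, 3 * da (U i j) + i)%N.

Lemma key_mod (U V : 'M[P]_3) (i j i' j' : 'I_3) :
  key U i j = key V i' j' -> i = i' /\ j = j'.
Proof.
rewrite /key => -[e1 e2]; split; apply: val_inj => /=.
  by rewrite -(mod3 (da (U i j)) i) e2 mod3.
by rewrite -(mod3 (db (U i j)) j) e1 mod3.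
Qed.


Section Core.
Variables (s : seq 'M[P]_3) (Us : 'M[P]_3) (i0 j0 : 'I_3).
Hypotheses (hUs : Us \in s) (hUs0 : Us i0 j0 != 0)
 (hmax : forall U i j, U \in s -> U i j != 0 -> lelex (key U i j) (key Us i0 j0)).

Local Notation K := (key Us i0 j0).
Definition pp : 'I_3 := Ordinal (ltn_pmod (i0 + i0) (isT : (0 < 3)%N)).
Definition qq : 'I_3 := Ordinal (ltn_pmod (j0 + j0) (isT : (0 < 3)%N)).
Definition Dn := (2 * db (Us i0 j0) + (j0 + j0) %/ 3)%N.
Definition Dm := (2 * da (Us i0 j0) + (i0 + i0) %/ 3)%N.
Definition val (U : 'M[P]_3) : C :=
  if (U i0 j0 != 0) && (key U i0 j0 == K) then
    lc2 (U i0 j0) * ((lc2 (U i0 j0))^* * eps C ^+ (i0 * j0)) * eps C ^+ (j0 * i0)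
  else 0.

Lemma strict_lemma (U : 'M[P]_3) (i j k l : 'I_3) : U \in s ->
  (((i + k) %% 3)%N == pp) && (((j + l) %% 3)%N == qq) ->
  U i j != 0 -> U k l != 0 -> (key U i j != K) || (key U k l != K) ->
  coef2 (Pterm U (Pstar U) i j k l) Dn Dm = 0.
Proof.
move=> hU /andP[/eqP hp /eqP hq] hij hkl hne.
have l1 := hmax hU hij; have l2 := hmax hU hkl.
have s12 : ltlex (key U i j) K || ltlex (key U k l) K.
  by case/orP: hne => h; [rewrite (lelex_ltlex l1 h) | rewrite (lelex_ltlex l2 h) orbT].
have := ltlex_add l1 l2 s12.
have eq1 : addp (key U i j) (key U k l) =
  (3 * db (Pterm U (Pstar U) i j k l) + (j + l) %% 3, 3 * da (Pterm U (Pstar U) i j k l) + (i + k) %% 3)%N.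
  rewrite /addp /key (db_term hij hkl) (da_term hij hkl) /=.
  have := divn_eq (j + l) 3; have := divn_eq (i + k) 3.
  rewrite -!plusE -!multE => h1 h2; congr pair; lia.
have eq2 : addp K K = (3 * Dn + qq, 3 * Dm + pp)%N.
  rewrite /addp /key /Dn /Dm /=.
  have := divn_eq (j0 + j0) 3; have := divn_eq (i0 + i0) 3.
  rewrite -!plusE -!multE => h1 h2; congr pair; lia.
rewrite eq1 eq2 hp hq => /ltlex_cancel hlt.
exact: coef2_low.
Qed.

Lemma claim1 (U : 'M[P]_3) (i j k l : 'I_3) : U \in s ->
  coef2 (if (((i + k) %% 3)%N == pp) && (((j + l) %% 3)%N == qq)
         then Pterm U (Pstar U) i j k l else 0) Dn Dm =
  if [&& i == i0, j == j0, k == i0 & l == j0] then val U else 0.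
Proof.
move=> hU.
have [/and4P[/eqP ei /eqP ej /eqP ek /eqP el]|ht] := boolP [&& i == i0, j == j0, k == i0 & l == j0].
  subst i j k l.
  have hc : (((i0 + i0) %% 3)%N == pp) && (((j0 + j0) %% 3)%N == qq) by rewrite !eqxx.
  rewrite hc.
  case: (eqVneq (U i0 j0) 0) => h0.
    by rewrite term_eq0 ?h0 ?eqxx // coef20 /val h0 eqxx.
  case: (eqVneq (key U i0 j0) K) => e.
    have [e1 e2] : db (U i0 j0) = db (Us i0 j0) /\ da (U i0 j0) = da (Us i0 j0).
      move: e; rewrite /key => -[e1 e2].
      by split; [move: e1|move: e2]; rewrite -!multE -!plusE; lia.
    have eDn : Dn = db (Pterm U (Pstar U) i0 j0 i0 j0).
      by rewrite (db_term h0 h0) e1 /Dn -!multE -!plusE; lia.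
    have eDm : Dm = da (Pterm U (Pstar U) i0 j0 i0 j0).
      by rewrite (da_term h0 h0) e2 /Dm -!multE -!plusE; lia.
    by rewrite eDn eDm coef2_top lc2_term /val h0 e eqxx.
  rewrite (strict_lemma hU hc h0 h0) ?e //.
  by rewrite /val h0 (negbTE e).

case: ifP => hc; last by rewrite coef20.
case: (eqVneq (U i j) 0) => h1; first by rewrite term_eq0 ?h1 ?eqxx // coef20.
case: (eqVneq (U k l) 0) => h2; first by rewrite term_eq0 ?h2 ?eqxx ?orbT // coef20.
apply: (strict_lemma hU hc h1 h2).
case: (eqVneq (key U i j) K) => e1 //; case: (eqVneq (key U k l) K) => e2 //=.
have [ei ej] := key_mod e1; have [ek el] := key_mod e2.
by move: ht; rewrite ei ej ek el !eqxx.
Qed.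

Lemma claim2 (U : 'M[P]_3) : U \in s -> coef2 (Pmul U (Pstar U) pp qq) Dn Dm = val U.
Proof.
move=> hU; rewrite mxE.
pose F := fun i j k l : 'I_3 => if [&& i == i0, j == j0, k == i0 & l == j0] then val U else 0.
have e : val U = F i0 j0 i0 j0 by rewrite /F !eqxx.
rewrite e -(@sum4 F i0 j0 i0 j0); last by move=> i j k l; rewrite /F => /negbTE ->.
rewrite /coef2 coef_sum coef_sum; apply: eq_bigr => i _.
rewrite coef_sum coef_sum; apply: eq_bigr => j _.
rewrite coef_sum coef_sum; apply: eq_bigr => k _.
rewrite coef_sum coef_sum; apply: eq_bigr => l _.
exact: claim1.
Qed.

End Core.


Theorem core (s : seq 'M[P]_3) : s != [::] -> (forall U, U \in s -> U != 0) ->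
  \sum_(U <- s) Pmul U (Pstar U) != 0.
Proof.
move=> hs hnz.
pose X := [seq x : 'M[P]_3 * ('I_3 * 'I_3) <- [seq (U, ij) | U <- s, ij <- enum {: 'I_3 * 'I_3}] | x.1 x.2.1 x.2.2 != 0].
have memX U i j : U \in s -> U i j != 0 -> (U, (i, j)) \in X.
  move=> hU hij; rewrite mem_filter /= hij /=.
  by apply/allpairsP; exists (U, (i, j)); split => //; rewrite mem_enum.
have hX : X != [::].
  have [U0 hU0in] : exists U0, U0 \in s by case: (s) hs => // U0 ? _; exists U0; rewrite mem_head.
  have hU0 := hnz U0 hU0in.
  case: (pickP (fun ij : 'I_3 * 'I_3 => U0 ij.1 ij.2 != 0)) => [[i j] /= hij|h].
    apply/negP => /eqP hX0.
    by have := memX U0 i j hU0in hij; rewrite hX0.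
  case/negP: hU0; apply/eqP/matrixP => i j.
  by move: (h (i, j)) => /= /negbFE /eqP ->; rewrite mxE.
have [[Us [i0 j0]] hmem hmx] := seq_max (fun x => key x.1 x.2.1 x.2.2) hX.
move: hmem; rewrite mem_filter /= => /andP[hUs0 hin].
have hUs : Us \in s by case/allpairsP: hin => [[U' ij'] [hU' _ /= [-> _]]].
have hmax : forall U i j, U \in s -> U i j != 0 -> lelex (key U i j) (key Us i0 j0).
  by move=> U i j hU hij; apply: (hmx (U, (i, j))); apply: memX.
pose e := eps C ^+ (i0 * j0) * eps C ^+ (j0 * i0).
pose w (U : 'M[P]_3) := if (U i0 j0 != 0) && (key U i0 j0 == key Us i0 j0) then
  lc2 (U i0 j0) * (lc2 (U i0 j0))^* else 0.
have hvw U : val Us i0 j0 U = w U * e.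
  rewrite /val /w; case: ifP => _; last by rewrite mul0r.
  by rewrite /e !mulrA.
apply/negP => /eqP hS.
have : coef2 ((\sum_(U <- s) Pmul U (Pstar U)) (pp i0) (qq j0)) (Dn Us i0 j0) (Dm Us i0 j0) = 0.
  by rewrite hS mxE coef20.
rewrite summxE /coef2 coef_sum coef_sum.
have -> : \sum_(U <- s) ((Pmul U (Pstar U) (pp i0) (qq j0))`_(Dn Us i0 j0))`_(Dm Us i0 j0)
   = \sum_(U <- s) w U * e.
  rewrite big_seq [RHS]big_seq; apply: eq_bigr => U hU.
  by rewrite -hvw -(claim2 hmax hU).
rewrite -mulr_suml => /eqP; rewrite mulf_eq0 => /orP[|].
  rewrite psumr_eq0 => [|U _]; last first.
    by rewrite /w; case: ifP => _ //; exact: mul_conjC_ge0.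
  move/allP => /(_ Us hUs) /=; rewrite /w hUs0 eqxx /=.
  rewrite mulf_eq0 conjC_eq0 orbb /lc2 !lead_coef_eq0.
  by rewrite (negbTE hUs0).
by rewrite /e mulf_eq0 !expf_eq0 (negbTE (eps_neq0 C)) !andbF.
Qed.

End S8.

Section S9.
Variable C : numClosedFieldType.
Local Notation P := {poly {poly C}}.
Local Notation RF := (RF C).
Local Notation D3 := (D3 C).

Lemma common_den (l : seq RF) :
  exists D : P, D != 0 /\ forall f, f \in l -> exists p : P, tofrac D * f = tofrac p.
Proof.
elim: l => [|f l [D [hD hl]]].
  by exists 1; split; [exact: oner_neq0 | move=> f].
have hd := denom_ratioP (repr f).
exists ((repr f).2 * D); split; first exact: mulf_neq0.
move=> g; rewrite in_cons => /orP[/eqP->|hg].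
  exists (D * (repr f).1).
  have td : tofrac (repr f).2 != 0 :> RF by rewrite tofrac_eq0.
  have E (a b c : RF) : a != 0 -> (a * b) * (c / a) = b * c.
    by move=> ha; rewrite [a * b]mulrC -mulrA [a * _]mulrCA mulfV ?mulr1.
  have hf := frac_repr C f.
  move: hf td; set n := (repr f).1; set d := (repr f).2 => hf td.
  by rewrite hf tofracM (E _ _ _ td) tofracM.
have [p hp] := hl g hg.
by exists ((repr f).2 * p); rewrite tofracM -mulrA hp tofracM.
Qed.

Lemma poly_matrices (s : seq D3) : exists D : P, D != 0 /\
  forall r, r \in s -> exists V : 'M[P]_3, toD V = tofrac D *: r.
Proof.
have [D [hD hl]] := common_den [seq (r : 'M[RF]_3) ij.1 ij.2 | r <- s, ij <- enum {: 'I_3 * 'I_3}].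
exists D; split => // r hr.
have : forall ij : 'I_3 * 'I_3, exists p : P, tofrac D * r ij.1 ij.2 = tofrac p.
  move=> ij; apply: hl; apply/allpairsP; exists (r, ij); split => //; exact: mem_enum.
case/fin_all_exists => g hg.
exists (\matrix_(i, j) g (i, j)); apply/matrixP => i j.
by rewrite !mxE -(hg (i, j)).
Qed.

Lemma D3star_scale (c : RF) (r : D3) : D3star (c *: r) = conjRF c *: D3star r.
Proof. by apply/matrixP => i j; rewrite !mxE conjRFM mulrA. Qed.

Lemma D3mul_scale (c c' : RF) (u v : D3) : D3mul (c *: u) (c' *: v) = (c * c') *: D3mul u v.
Proof.
apply/matrixP => p q; rewrite !mxE mulr_sumr; apply: eq_bigr => i _.
rewrite mulr_sumr; apply: eq_bigr => j _.
rewrite mulr_sumr; apply: eq_bigr => k _.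
rewrite mulr_sumr; apply: eq_bigr => l _.
case: ifP => _; last by rewrite mulr0.
rewrite !mxE !mulrA; congr (_ * _ * _ * _).
by rewrite [c * _ * c']mulrAC.
Qed.

Lemma D3mul0 (v : D3) : D3mul 0 v = 0.
Proof.
apply/matrixP => p q; rewrite !mxE.
apply: big1 => i _; apply: big1 => j _; apply: big1 => k _; apply: big1 => l _.
by case: ifP => _ //; rewrite mxE !mul0r.
Qed.

Lemma toDD (A B : 'M[P]_3) : toD (A + B) = toD A + toD B.
Proof. by apply/matrixP => i j; rewrite !mxE tofracD. Qed.

Lemma toD0 : toD (0 : 'M[P]_3) = 0.
Proof. by apply/matrixP => i j; rewrite !mxE tofrac0. Qed.

Lemma toD_eq0 (A : 'M[P]_3) : toD A = 0 -> A = 0.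
Proof.
move/matrixP => h; apply/matrixP => i j; move: (h i j); rewrite !mxE.
by move/eqP; rewrite tofrac_eq0 => /eqP.
Qed.

Lemma build (c : RF) (s : seq D3) : (forall r, r \in s -> exists V, toD V = c *: r) ->
  exists vs : seq 'M[P]_3, [/\ size vs = size s,
    (forall V, V \in vs -> exists2 r, r \in s & toD V = c *: r) &
    \sum_(V <- vs) toD (Pmul V (Pstar V)) = \sum_(r <- s) D3mul (c *: r) (D3star (c *: r))].
Proof.
elim: s => [|r s IH] h.
  by exists [::]; split; [by [] | by move=> V; rewrite in_nil | by rewrite !big_nil].
have [V hV] := h r (mem_head _ _).
have [vs [e1 e2 e3]] : exists vs : seq 'M[P]_3, [/\ size vs = size s,
    (forall V, V \in vs -> exists2 r, r \in s & toD V = c *: r) &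
    \sum_(V <- vs) toD (Pmul V (Pstar V)) = \sum_(r <- s) D3mul (c *: r) (D3star (c *: r))].
  by apply: IH => r' hr'; apply: h; rewrite in_cons hr' orbT.
exists (V :: vs); split.
- by rewrite /= e1.
- move=> W; rewrite in_cons => /orP[/eqP->|hW]; first by exists r => //; rewrite mem_head.
  by have [r' hr' e] := e2 W hW; exists r' => //; rewrite in_cons hr' orbT.
- by rewrite !big_cons e3 -bridge_mul -bridge_star hV.
Qed.

Lemma part1 : formally_real (@D3mul C) (@D3star C).
Proof.
move=> s hs hnz.
have hr0 : forall r, r \in s -> r != 0.
  move=> r hr; apply/eqP => e; move: (hnz r hr); rewrite e D3mul0 eqxx //.
have [D [hD hm]] := poly_matrices s.
have [vs [e1 e2 e3]] := build hm.
have hc : tofrac D != 0 :> RF by rewrite tofrac_eq0.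
have hvs : vs != [::] by rewrite -size_eq0 e1 size_eq0.
have hvnz : forall V, V \in vs -> V != 0.
  move=> V hV; have [r hr e] := e2 V hV; apply/eqP => V0.
  move: e; rewrite V0 toD0 => /esym/eqP; rewrite scalemx_eq0 (negbTE hc) /=.
  by rewrite (negbTE (hr0 r hr)).
have := core hvs hvnz.
apply: contra => /eqP hS; apply/eqP; apply: toD_eq0.
rewrite (big_morph (@toD C) toDD toD0) e3.
under eq_bigr => r _ do rewrite D3star_scale D3mul_scale.
by rewrite -scaler_sumr hS scaler0.
Qed.

End S9.

Unset Implicit Arguments.

Theorem mainTheorem8 (C : numClosedFieldType) :
  formally_real (@D3mul C) (@D3star C) /\
  ~ formally_real (fun X Y : 'M[RF C]_3 => X *m Y) (@Msharp C).
Proof.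
split; [exact: part1 | exact: part2].
Qed.
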